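(* Assume the setting of the model $Y_i = Z_i^T \pi^* + D_i \beta^* + \epsilon_i$, $E(\epsilon_i \mid Z_i)=0$, with $B^* = \{j : \pi^*_j \ne 0\}$, an integer $U$ with $1 \le U \le L-1$ (so that every $B$ with $c(B)=U-1$ has $c(B^C) \ge 2$), and $c(B^* ) < U$. Let $\alpha_1, \alpha_2 \in (0,1)$ with $\alpha = \alpha_1 + \alpha_2 < 1$. For every $\beta_0$ and $B \subseteq \{1,\ldots,L\}$ let $T(\beta_0,B)$ be a test statistic with critical value $q^T_{1-\alpha_2}(B)$ such that whenever $B^* \subseteq B$ and $\beta^*=\beta_0$, $\mathrm{pr}\{T(\beta_0,B) > q^T_{1-\alpha_2}(B)\} \le \alpha_2$, and let $C_{1-\alpha_2}(Y,D,Z,B) = \{\beta_0 : T(\beta_0,B) \le q^T_{1-\alpha_2}(B)\}$. For every $B$ with $c(B^C) \ge 2$ let $S(B)$ be a pretest statistic for the null hypothesis $\pi^*_{B^C} = 0$ with critical value $q^S_{1-\alpha_1}(B)$ such that whenever $\pi^*_{B^C} = 0$ (equivalently $B^* \subseteq B$), $\mathrm{pr}\{S(B) > q^S_{1-\alpha_1}(B)\} \le \alpha_1$. Define \[ C'_{1-\alpha}(Y,D,Z) = \bigcup \big\{ C_{1-\alpha_2}(Y,D,Z,B) : B \subseteq \{1,\ldots,L\},\ c(B) = U-1,\ S(B) \le q^S_{1-\alpha_1}(B) \big\}. \] Then $\mathrm{pr}\{\beta^* \in C'_{1-\alpha}(Y,D,Z)\} \ge 1-\alpha$.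
   Context: $Y=(Y_1,\ldots,Y_n)$, $D=(D_1,\ldots,D_n)$, $Z$ is the $n\times L$ matrix with rows $Z_i^T$, and $\pi^*\in\mathbb{R}^L$, $\beta^*\in\mathbb{R}$ are unknown. For $A \subseteq \{1,\ldots,L\}$, $c(A)$ is its cardinality, $A^C$ its complement, and for a vector $\pi \in \mathbb{R}^L$, $\pi_A$ is the subvector of entries indexed by $A$. *)

(* Defs.v *)
From Stdlib Require Import Reals.
From mathcomp Require Import all_boot.
Open Scope R_scope.
Set Implicit Arguments.
Unset Strict Implicit.
Unset Printing Implicit Defensive.

(* A probability space on an abstract sample space Omega:
   a sigma-algebra of measurable events and a countably additive
   probability measure pr (pr is total; only its values on measurable
   events are meaningful). *)
Record prob_space (Omega : Type) := ProbSpace {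
  measurable : (Omega -> Prop) -> Prop;
  pr : (Omega -> Prop) -> R;
  meas_full : measurable (fun _ => True);
  meas_compl : forall A, measurable A -> measurable (fun w => ~ A w);
  meas_cunion : forall A : nat -> Omega -> Prop,
      (forall k, measurable (A k)) -> measurable (fun w => exists k, A k w);
  pr_nonneg : forall A, measurable A -> (0 <= pr A);
  pr_full : pr (fun _ => True) = 1;
  pr_sigma_add : forall A : nat -> Omega -> Prop,
      (forall k, measurable (A k)) ->
      (forall i j w, i <> j -> A i w -> A j w -> False) ->
      infinite_sum (fun k => pr (A k)) (pr (fun w => exists k, A k w))
}.

Definition nzb (x : R) : bool := if Req_EM_T x 0 then false else true.

Definition supp (L : nat) (pi : 'I_L -> R) : {set 'I_L} := [set j | nzb (pi j)].

(* Type of a statistic computed from the data (Y, D, Z),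
   with Y, D in R^n and Z an n x L matrix (Z i j = j-th entry of Z_i). *)
Definition data_stat (n L : nat) :=
  ('I_n -> R) -> ('I_n -> R) -> ('I_n -> 'I_L -> R) -> R.

Definition C_set (n L : nat) (T : R -> {set 'I_L} -> data_stat n L)
  (qT : {set 'I_L} -> data_stat n L)
  (Y D : 'I_n -> R) (Z : 'I_n -> 'I_L -> R) (B : {set 'I_L}) (beta0 : R) : Prop :=
  (T beta0 B Y D Z <= qT B Y D Z).

Definition Cprime_set (n L U : nat) (T : R -> {set 'I_L} -> data_stat n L)
  (qT : {set 'I_L} -> data_stat n L)
  (S qS : {set 'I_L} -> data_stat n L)
  (Y D : 'I_n -> R) (Z : 'I_n -> 'I_L -> R) (beta0 : R) : Prop :=
  exists B : {set 'I_L},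
    #|B| = (U - 1)%N /\ (S B Y D Z <= qS B Y D Z) /\ C_set T qT Y D Z B beta0.

(* Main.v *)
Require Import Defs.
From Stdlib Require Import Reals Lra Lia.
From Stdlib Require Import FunctionalExtensionality PropExtensionality.
From mathcomp Require Import all_boot zify.
Open Scope R_scope.


Section PS.
Variables (Omega : Type) (P : prob_space Omega).

Lemma pred_ext {A B : Omega -> Prop} : (forall w, A w <-> B w) -> A = B.
Proof. move=> H; apply: functional_extensionality => w; apply: propositional_extensionality; exact: H. Qed.

Lemma meas_ext {A B : Omega -> Prop} : measurable P A -> (forall w, A w <-> B w) -> measurable P B.
Proof. by move=> HA /pred_ext <-. Qed.

Lemma meas_empty : measurable P (fun _ => False).
Proof. apply: meas_ext (meas_compl (meas_full P)) _ => w; tauto. Qed.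

Definition seq2 (A B : Omega -> Prop) (k : nat) : Omega -> Prop :=
  match k with 0%nat => A | 1%nat => B | _ => fun _ => False end.

Lemma meas_seq2 {A B : Omega -> Prop} : measurable P A -> measurable P B -> forall k, measurable P (seq2 A B k).
Proof. move=> HA HB [|[|k]] //=; exact: meas_empty. Qed.

Lemma meas_or {A B : Omega -> Prop} : measurable P A -> measurable P B -> measurable P (fun w => A w \/ B w).
Proof.
move=> HA HB; apply: meas_ext (meas_cunion (meas_seq2 HA HB)) _ => w; split.
  by case=> [[|[|k]]] /=; tauto.
by case=> H; [exists 0%nat | exists 1%nat].
Qed.

Lemma meas_not {A : Omega -> Prop} : measurable P A -> measurable P (fun w => ~ A w).
Proof. exact: meas_compl. Qed.

Lemma meas_and {A B : Omega -> Prop} : measurable P A -> measurable P B -> measurable P (fun w => A w /\ B w).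
Proof.
move=> HA HB; apply: meas_ext (meas_not (meas_or (meas_not HA) (meas_not HB))) _ => w.
split; last tauto. move=> H; split; apply: Classical_Prop.NNPP; tauto.
Qed.

Lemma sum_const c n : sum_f_R0 (fun _ => c) n = INR (S n) * c.
Proof. elim: n => [|n IH]; first by rewrite /= Rmult_1_l. rewrite [sum_f_R0 _ _]/= IH. rewrite (S_INR (S n)). lra. Qed.

Lemma pr_empty : pr P (fun _ => False) = 0.
Proof.
have H := pr_sigma_add (fun _ => meas_empty) (fun i j w _ (f : False) _ => f).
have E : (fun w : Omega => exists _ : nat, False) = (fun _ => False).
  apply: pred_ext => w; split; [by case | by []].
rewrite E in H.
have H0 := pr_nonneg meas_empty.
case: (Rle_lt_or_eq_dec _ _ H0) => // Hp.
case: (H _ Hp) => N HN.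
have := HN (S N) ltac:(lia).
rewrite sum_const /Rdist S_INR S_INR.
have : 0 <= INR N by apply: pos_INR.
move=> HN0 Hc. rewrite Rabs_right in Hc; nra.
Qed.

Lemma pr_add2 {A B : Omega -> Prop} : measurable P A -> measurable P B -> (forall w, A w -> B w -> False) ->
  pr P (fun w => A w \/ B w) = pr P A + pr P B.
Proof.
move=> HA HB Hd.
have H := pr_sigma_add (meas_seq2 HA HB).
have E : (fun w => exists k, seq2 A B k w) = (fun w => A w \/ B w).
  apply: pred_ext => w; split.
    by case=> [[|[|k]]] /=; tauto.
  by case=> H1; [exists 0%nat | exists 1%nat].
rewrite E in H.
apply: uniqueness_sum (H _) _.
  move=> [|[|i]] [|[|j]] w Hij /= a b; solve [exact: Hij | exact: Hd a b | exact: Hd b a | done].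
move=> eps He; exists 1%nat => n Hn.
have -> : sum_f_R0 (fun k => pr P (seq2 A B k)) n = pr P A + pr P B.
  case: n Hn => [|n] Hn; first lia.
  elim: n {Hn} => [|n IH] /=; first lra.
  rewrite /= in IH. rewrite IH pr_empty; lra.
rewrite /Rdist Rminus_diag Rabs_R0; lra.
Qed.

Lemma pr_mono {A B : Omega -> Prop} : measurable P A -> measurable P B -> (forall w, A w -> B w) -> pr P A <= pr P B.
Proof.
move=> HA HB Hs.
have E : B = (fun w => A w \/ (B w /\ ~ A w)).
  apply: pred_ext => w; split; last by case; [apply: Hs | case].
  by move=> Hb; case: (Classical_Prop.classic (A w)); [left | right].
rewrite E pr_add2 //; first (have := pr_nonneg (meas_and HB (meas_not HA)); lra).
  exact: meas_and HB (meas_not HA).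
by move=> w ? [].
Qed.

Lemma pr_compl {A : Omega -> Prop} : measurable P A -> pr P (fun w => ~ A w) = 1 - pr P A.
Proof.
move=> HA. rewrite -(pr_full P).
have E : (fun _ : Omega => True) = (fun w => A w \/ ~ A w).
  apply: pred_ext => w; have := Classical_Prop.classic (A w); tauto.
rewrite E pr_add2 //; try lra; try exact: meas_not; try by move=> w.
Qed.

Lemma pr_union {A B : Omega -> Prop} : measurable P A -> measurable P B ->
  pr P (fun w => A w \/ B w) <= pr P A + pr P B.
Proof.
move=> HA HB.
have E : (fun w => A w \/ B w) = (fun w => A w \/ (B w /\ ~ A w)).
  apply: pred_ext => w; have := Classical_Prop.classic (A w); tauto.
have M := meas_and HB (meas_not HA).
rewrite E pr_add2 //; last by move=> w ? [].
have := pr_mono M HB (fun w => @proj1 _ _). lra.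
Qed.
End PS.
Arguments meas_ext {Omega P A B}.
Arguments meas_or {Omega P A B}.
Arguments meas_and {Omega P A B}.
Arguments meas_not {Omega P A}.
Arguments pr_mono {Omega P A B}.
Arguments pr_compl {Omega P A}.
Arguments pr_union {Omega P A B}.

Lemma extend_set (T : finType) (k : nat) (A : {set T}) :
  (#|A| <= k <= #|T|)%N -> exists B : {set T}, A \subset B /\ #|B| = k.
Proof.
move=> /andP [H1 H2].
have [m Hm] : exists m, k = (#|A| + m)%N by exists (k - #|A|)%N; lia.
elim: m A Hm H1 => [|m IH] A Hm H1.
  by exists A; split => //; lia.
have [x Hx] : exists x, x \notin A.
  case: (pickP [pred x | x \notin A]) => [x Hx|H]; first by exists x.
  have : A = setT by apply/setP => y; rewrite inE; have := H y; by move/negbFE.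
  move=> EA; move: Hm H2; rewrite EA cardsT; lia.
have [B [HB1 HB2]] := IH (x |: A) ltac:(rewrite cardsU1 Hx /=; lia) ltac:(rewrite cardsU1 Hx /=; lia).
exists B; split => //; apply: subset_trans HB1; exact: subsetUr.
Qed.

Lemma meas_fin_exists (Omega : Type) (P : prob_space Omega) (I : finType)
  (Q : I -> Omega -> Prop) : (forall i, measurable P (Q i)) ->
  measurable P (fun w => exists i, Q i w).
Proof.
move=> HQ.
pose A k := match nth None (map Some (enum I)) k with Some i => Q i | None => fun _ => False end.
have HA : forall k, measurable P (A k).
  move=> k; rewrite /A; case: (nth _ _ _) => [i|]; [exact: HQ | exact: meas_empty].
apply: meas_ext (meas_cunion HA) _ => w; split.
  case=> k; rewrite /A; case: (nth _ _ _) => [i Hi|//]; by exists i.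
case=> i Hi; exists (index i (enum I)); rewrite /A.
have Hin : (index i (enum I) < size (enum I))%N by rewrite index_mem mem_enum.
by rewrite (nth_map i) // nth_index // mem_enum.
Qed.

Theorem theorem2
  (Omega : Type) (P : prob_space Omega)
  (n L U : nat)
  (Y D : Omega -> 'I_n -> R) (Z : Omega -> 'I_n -> 'I_L -> R)
  (eps : Omega -> 'I_n -> R)
  (pi_star : 'I_L -> R) (beta_star : R)
  (* the linear model Y_i = Z_i^T pi* + D_i beta* + eps_i *)
  (Hmodel : forall w i, Y w i = (\big[Rplus/0]_(j < L) (Z w i j * pi_star j)
                                 + D w i * beta_star + eps w i))
  (HU : (1 <= U <= L - 1)%N)
  (HBstar : (#|supp pi_star| < U)%N)
  (alpha1 alpha2 : R)
  (Ha1 : (0 < alpha1 < 1)) (Ha2 : (0 < alpha2 < 1))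
  (Ha : (alpha1 + alpha2 < 1))
  (T : R -> {set 'I_L} -> data_stat n L) (qT : {set 'I_L} -> data_stat n L)
  (Sstat qS : {set 'I_L} -> data_stat n L)
  (* the statistics are random variables (the relevant events are measurable) *)
  (HTmeas : forall beta0 B, measurable P (fun w =>
      (T beta0 B (Y w) (D w) (Z w) > qT B (Y w) (D w) (Z w))))
  (HSmeas : forall B, measurable P (fun w =>
      (Sstat B (Y w) (D w) (Z w) > qS B (Y w) (D w) (Z w))))
  (* validity of the test T: if B* ⊆ B and beta* = beta0, level alpha2 *)
  (HT : forall (beta0 : R) (B : {set 'I_L}), supp pi_star \subset B -> beta_star = beta0 ->
      (pr P (fun w => (T beta0 B (Y w) (D w) (Z w) > qT B (Y w) (D w) (Z w)))
         <= alpha2))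
  (* validity of the pretest S for c(B^C) >= 2: if B* ⊆ B, level alpha1 *)
  (HS : forall B : {set 'I_L}, (2 <= #|~: B|)%N -> supp pi_star \subset B ->
      (pr P (fun w => (Sstat B (Y w) (D w) (Z w) > qS B (Y w) (D w) (Z w)))
         <= alpha1)) :
  (pr P (fun w => Cprime_set U T qT Sstat qS (Y w) (D w) (Z w) beta_star)
     >= 1 - (alpha1 + alpha2)).
Proof.
set A1 := fun B w => Sstat B (Y w) (D w) (Z w) > qS B (Y w) (D w) (Z w).
set A2 := fun B w => T beta_star B (Y w) (D w) (Z w) > qT B (Y w) (D w) (Z w).
have [B0 [HB0s HB0c]] : exists B : {set 'I_L}, supp pi_star \subset B /\ #|B| = (U - 1)%N.
  apply: extend_set; rewrite card_ord; apply/andP; split; lia.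
have Hc : (2 <= #|~: B0|)%N by rewrite cardsCs setCK card_ord HB0c; lia.
have M1 := HSmeas B0. have M2 := HTmeas beta_star B0.
have Mor := meas_or M1 M2.
have MC : measurable P (fun w => Cprime_set U T qT Sstat qS (Y w) (D w) (Z w) beta_star).
  apply: meas_fin_exists => B.
  case: (boolP (#|B| == (U - 1)%N)) => [/eqP HB|HB].
    apply: meas_ext (meas_and (meas_not (HSmeas B)) (meas_not (HTmeas beta_star B))) _ => w.
    rewrite /C_set; split.
      by case=> [h1 h2]; split => //; split; apply: Rnot_lt_le.
    by case=> _ [h1 h2]; split; apply: Rle_not_lt.
  apply: meas_ext (@meas_empty _ P) _ => w; split => // [[h]]; by rewrite h eqxx in HB.
have Hsub : forall w, ~ (A1 B0 w \/ A2 B0 w) ->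
    Cprime_set U T qT Sstat qS (Y w) (D w) (Z w) beta_star.
  move=> w h; exists B0; split => //; rewrite /C_set; split; apply: Rnot_lt_le => h'; apply: h.
    by left. by right.
have := pr_mono (meas_not Mor) MC Hsub.
rewrite pr_compl //.
have := pr_union M1 M2.
have := HS B0 Hc HB0s. have := HT beta_star B0 HB0s (erefl beta_star).
rewrite /A1 /A2. lra.
Qed.
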